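(* Let $X \in \Lambda^2_{14} = \mathfrak{g}_2$ with $\operatorname{rank} X \leq 4$. Then there exists a $\mathrm{G}_2$-adapted frame $\mathcal{B} = \{e_1,\dots,e_7\}$ such that the matrix $[X]_{\mathcal{B}}$, whose $(i,j)$ entry is $X(e_i,e_j)$, has the form $$ [X]_{\mathcal{B}} = \begin{pmatrix} 0_{3\times 3} & 0_{3\times 4} \\ 0_{4\times 3} & Y \end{pmatrix}, \qquad Y = \begin{pmatrix} 0 & -a & -b & -c \\ a & 0 & -c & b \\ b & c & 0 & -a \\ c & -b & a & 0 \end{pmatrix} $$ for some $a,b,c\in\mathbb{R}$.
   Context: Equip $\mathbb{R}^7$ with its standard inner product, orientation and basis. Let $\varphi = e_{123} - e_{167} - e_{527} - e_{563} - e_{415} - e_{426} - e_{437}$ ($e_{ijk} = e_i\wedge e_j\wedge e_k$) and define $\times$ by $\langle u\times v,w\rangle = \varphi(u,v,w)$. A skew bilinear form $X$ is identified with the operator $X$ given by $X(a,b)=\langle X(a),b\rangle$. $\Lambda^2_{14}=\mathfrak{g}_2$ is the set of skew bilinear forms $X$ with $X(v\times w) = X(v)\times w + v\times X(w)$ for all $v,w$. A $\mathrm{G}_2$-adapted frame is an oriented orthonormal basis $\{e_1,\dots,e_7\}$ with $e_3 = e_1\times e_2$, $e_5 = e_1\times e_4$, $e_6 = e_2\times e_4$, $e_7 = e_3\times e_4$. *)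

(* Defs.v *)
From HB Require Import structures.
From mathcomp Require Import all_boot all_order all_algebra.
From mathcomp Require Import reals.
Set Implicit Arguments. Unset Strict Implicit. Unset Printing Implicit Defensive.
Import Order.TTheory GRing.Theory Num.Theory.
Local Open Scope ring_scope.

Section G2.
Variable R : realType.

Definition crd (u : 'rV[R]_7) (n : nat) : R := u 0 (inord n).

Definition dot (u v : 'rV[R]_7) : R := \sum_(i < 7) u 0 i * v 0 i.

(* (e_i /\ e_j /\ e_k)(u,v,w), indices 0-based *)
Definition e3 (i j k : nat) (u v w : 'rV[R]_7) : R :=
  let x b := match nat_of_ord b with 0 => u | 1 => v | _ => w end in
  let idx a := match nat_of_ord a with 0 => i | 1 => j | _ => k end in
  \det (\matrix_(a < 3, b < 3) crd (x b) (idx a)).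

(* phi = e123 - e167 - e527 - e563 - e415 - e426 - e437 (1-based in paper) *)
Definition phi (u v w : 'rV[R]_7) : R :=
  e3 0 1 2 u v w - e3 0 5 6 u v w - e3 4 1 6 u v w - e3 4 5 2 u v w
  - e3 3 0 4 u v w - e3 3 1 5 u v w - e3 3 2 6 u v w.

(* cross product: <u x v, w> = phi(u,v,w); its k-th coordinate is phi(u,v,e_k) *)
Definition cross (u v : 'rV[R]_7) : 'rV[R]_7 :=
  \row_(k < 7) phi u v (delta_mx 0 k).

(* A skew bilinear form X(a,b) = a *m X *m b^T is stored as its matrix;
   the associated operator is a |-> a *m X, since <a *m X, b> = X(a,b). *)
Definition skew (X : 'M[R]_7) : Prop := X^T = - X.

Definition in_g2 (X : 'M[R]_7) : Prop :=
  skew X /\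
  forall v w : 'rV[R]_7, cross v w *m X = cross (v *m X) w + cross v (w *m X).

(* A frame is a 7x7 matrix E whose i-th row is e_(i+1). *)
Definition frame_vec (E : 'M[R]_7) (i : nat) : 'rV[R]_7 := row (inord i) E.

Definition G2_adapted (E : 'M[R]_7) : Prop :=
  (forall i j : 'I_7, dot (row i E) (row j E) = (i == j)%:R) /\
  0 < \det E /\
  frame_vec E 2 = cross (frame_vec E 0) (frame_vec E 1) /\
  frame_vec E 4 = cross (frame_vec E 0) (frame_vec E 3) /\
  frame_vec E 5 = cross (frame_vec E 1) (frame_vec E 3) /\
  frame_vec E 6 = cross (frame_vec E 2) (frame_vec E 3).

Definition mx_in_frame (X E : 'M[R]_7) : 'M[R]_7 := E *m X *m E^T.

Definition normal_form (a b c : R) : 'M[R]_7 :=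
  \matrix_(i < 7, j < 7)
    match nat_of_ord i, nat_of_ord j with
    | 3, 4 => - a | 3, 5 => - b | 3, 6 => - c
    | 4, 3 => a   | 4, 5 => - c | 4, 6 => b
    | 5, 3 => b   | 5, 4 => c   | 5, 6 => - a
    | 6, 3 => c   | 6, 4 => - b | 6, 5 => a
    | _, _ => 0
    end.

End G2.

(* Main.v *)
Require Import Defs.
From HB Require Import structures.
From mathcomp Require Import all_boot all_order all_algebra.
From mathcomp Require Import reals.
From mathcomp Require Import ring lra zify.
Import Order.TTheory GRing.Theory Num.Theory.
Local Open Scope ring_scope.

Definition shiftf {R : Type} (f : nat -> nat -> R) (j : nat) :=
  fun a b : nat => f a.+1 (if (b < j)%N then b else b.+1).

Lemma expand_f (R : comNzRingType) n (f : nat -> nat -> R) :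
  \det (\matrix_(i < n.+1, j < n.+1) f i j) =
  \sum_(j < n.+1) f 0%N j * (-1) ^+ j *
     \det (\matrix_(i < n, k < n) shiftf f j i k).
Proof.
rewrite (expand_det_row _ ord0); apply: eq_bigr => j _.
rewrite /cofactor mxE -mulrA; congr (_ * _); rewrite add0n; congr (_ * _).
congr (\det _); apply/matrixP => i k; rewrite !mxE /= /bump /shiftf /=.
by case: ltnP => // H; rewrite add1n.
Qed.

Lemma det0f (R : comNzRingType) (f : nat -> nat -> R) :
  \det (\matrix_(i < 0, j < 0) f i j) = 1.
Proof. exact: det_mx00. Qed.

Lemma det3f (R : comNzRingType) (f : nat -> nat -> R) :
  \det (\matrix_(i < 3, j < 3) f i j) = f 0 0 * f 1 1 * f 2 2 - f 0 0 * f 1 2 * f 2 1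
         - f 0 1 * f 1 0 * f 2 2 + f 0 1 * f 1 2 * f 2 0
         + f 0 2 * f 1 0 * f 2 1 - f 0 2 * f 1 1 * f 2 0.
Proof.
do 4 (rewrite ?expand_f ?det0f ?big_ord_recl ?big_ord0).
rewrite /shiftf /bump /=; rewrite /bump /=. ring.
Qed.

Lemma det3 (R : comNzRingType) (A : 'M[R]_3) :
  \det A = A 0 0 * A 1 1 * A 2 2 - A 0 0 * A 1 2 * A 2 1
         - A 0 1 * A 1 0 * A 2 2 + A 0 1 * A 1 2 * A 2 0
         + A 0 2 * A 1 0 * A 2 1 - A 0 2 * A 1 1 * A 2 0.
Proof.
have E : A = \matrix_(i < 3, j < 3) (fun a b => A (inord a) (inord b)) i j.
  by apply/matrixP => i j; rewrite mxE !inord_val.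
have e0 : inord 0 = (0 : 'I_3) by apply/val_inj; rewrite /= inordK.
have e1 : inord 1 = (1 : 'I_3) by apply/val_inj; rewrite /= inordK.
have e2 : inord 2 = (2 : 'I_3) by apply/val_inj; rewrite /= inordK.
by rewrite {1}E (det3f _ (fun a b => A (inord a) (inord b))) e0 e1 e2.
Qed.

Lemma crdE {R : realType} (u : 'rV[R]_7) (i : 'I_7) : u 0 i = crd u i.
Proof. by rewrite /crd inord_val. Qed.

Lemma crd_ext {R : realType} (u v : 'rV[R]_7) :
  crd u 0 = crd v 0 -> crd u 1 = crd v 1 -> crd u 2 = crd v 2 ->
  crd u 3 = crd v 3 -> crd u 4 = crd v 4 -> crd u 5 = crd v 5 ->
  crd u 6 = crd v 6 -> u = v.
Proof.
move=> h0 h1 h2 h3 h4 h5 h6; apply/rowP => i; rewrite !crdE.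
by case: i => [[|[|[|[|[|[|[|i]]]]]]]] //.
Qed.
Lemma inord_eq7 (n m : nat) : (n < 7)%N -> (m < 7)%N ->
  (inord n == inord m :> 'I_7) = (n == m).
Proof. by move=> hn hm; rewrite -val_eqE /= !inordK. Qed.

Lemma crd_delta {R : realType} (m n : nat) : (m < 7)%N -> (n < 7)%N ->
  crd (delta_mx 0 (inord m) : 'rV[R]_7) n = (n == m)%:R.
Proof. by move=> hm hn; rewrite /crd mxE eqxx /= inord_eq7. Qed.

Ltac crossT := rewrite /crd /cross mxE -/(crd _ _) /phi /e3 !det3 !mxE /=;
  rewrite -!/(crd _ _) !crd_delta //=; ring.
Lemma crd_cross0 {R : realType} (u v : 'rV[R]_7) :
  crd (cross u v) 0 = crd u 1 * crd v 2 - crd u 2 * crd v 1 + crd u 3 * crd v 4 - crd u 4 * crd v 3 - crd u 5 * crd v 6 + crd u 6 * crd v 5.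
Proof. crossT. Qed.

Lemma crd_cross1 {R : realType} (u v : 'rV[R]_7) :
  crd (cross u v) 1 = - crd u 0 * crd v 2 + crd u 2 * crd v 0 + crd u 3 * crd v 5 + crd u 4 * crd v 6 - crd u 5 * crd v 3 - crd u 6 * crd v 4.
Proof. crossT. Qed.

Lemma crd_cross2 {R : realType} (u v : 'rV[R]_7) :
  crd (cross u v) 2 = crd u 0 * crd v 1 - crd u 1 * crd v 0 + crd u 3 * crd v 6 - crd u 4 * crd v 5 + crd u 5 * crd v 4 - crd u 6 * crd v 3.
Proof. crossT. Qed.

Lemma crd_cross3 {R : realType} (u v : 'rV[R]_7) :
  crd (cross u v) 3 = - crd u 0 * crd v 4 - crd u 1 * crd v 5 - crd u 2 * crd v 6 + crd u 4 * crd v 0 + crd u 5 * crd v 1 + crd u 6 * crd v 2.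
Proof. crossT. Qed.

Lemma crd_cross4 {R : realType} (u v : 'rV[R]_7) :
  crd (cross u v) 4 = crd u 0 * crd v 3 - crd u 1 * crd v 6 + crd u 2 * crd v 5 - crd u 3 * crd v 0 - crd u 5 * crd v 2 + crd u 6 * crd v 1.
Proof. crossT. Qed.

Lemma crd_cross5 {R : realType} (u v : 'rV[R]_7) :
  crd (cross u v) 5 = crd u 0 * crd v 6 + crd u 1 * crd v 3 - crd u 2 * crd v 4 - crd u 3 * crd v 1 + crd u 4 * crd v 2 - crd u 6 * crd v 0.
Proof. crossT. Qed.

Lemma crd_cross6 {R : realType} (u v : 'rV[R]_7) :
  crd (cross u v) 6 = - crd u 0 * crd v 5 + crd u 1 * crd v 4 + crd u 2 * crd v 3 - crd u 3 * crd v 2 - crd u 4 * crd v 1 + crd u 5 * crd v 0.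
Proof. crossT. Qed.

Lemma crdD {R : realType} (u v : 'rV[R]_7) n : crd (u + v) n = crd u n + crd v n.
Proof. by rewrite /crd mxE. Qed.
Lemma crdB {R : realType} (u v : 'rV[R]_7) n : crd (u - v) n = crd u n - crd v n.
Proof. by rewrite /crd !mxE. Qed.
Lemma crdN {R : realType} (u : 'rV[R]_7) n : crd (- u) n = - crd u n.
Proof. by rewrite /crd mxE. Qed.
Lemma crdZ {R : realType} (a : R) (u : 'rV[R]_7) n : crd (a *: u) n = a * crd u n.
Proof. by rewrite /crd mxE. Qed.
Lemma crd0 {R : realType} n : crd (0 : 'rV[R]_7) n = 0.
Proof. by rewrite /crd mxE. Qed.

Lemma dot7 {R : realType} (u v : 'rV[R]_7) : dot u v =
  crd u 0 * crd v 0 + crd u 1 * crd v 1 + crd u 2 * crd v 2 + crd u 3 * crd v 3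
  + crd u 4 * crd v 4 + crd u 5 * crd v 5 + crd u 6 * crd v 6.
Proof.
rewrite /dot !big_ord_recl big_ord0 !crdE /bump /=; rewrite /bump /=; ring.
Qed.

Ltac crdS := rewrite ?(crd_cross0, crd_cross1, crd_cross2, crd_cross3, crd_cross4,
  crd_cross5, crd_cross6, crdD, crdB, crdN, crdZ, crd0).
Ltac vecT := apply: crd_ext; crdS; ring.
Ltac dotT := rewrite ?dot7; crdS; ring.


Lemma crossC {R : realType} (u v : 'rV[R]_7) : cross u v = - cross v u.
Proof. vecT. Qed.
Lemma crossxx {R : realType} (u : 'rV[R]_7) : cross u u = 0.
Proof. vecT. Qed.
Lemma crossDl {R : realType} (u v w : 'rV[R]_7) : cross (u + v) w = cross u w + cross v w.
Proof. vecT. Qed.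
Lemma crossDr {R : realType} (u v w : 'rV[R]_7) : cross w (u + v) = cross w u + cross w v.
Proof. vecT. Qed.
Lemma crossZl {R : realType} (a : R) (u w : 'rV[R]_7) : cross (a *: u) w = a *: cross u w.
Proof. vecT. Qed.
Lemma crossZr {R : realType} (a : R) (u w : 'rV[R]_7) : cross w (a *: u) = a *: cross w u.
Proof. vecT. Qed.
Lemma crossNl {R : realType} (u w : 'rV[R]_7) : cross (- u) w = - cross u w.
Proof. vecT. Qed.
Lemma crossNr {R : realType} (u w : 'rV[R]_7) : cross w (- u) = - cross w u.
Proof. vecT. Qed.
Lemma cross0l {R : realType} (w : 'rV[R]_7) : cross 0 w = 0.
Proof. vecT. Qed.
Lemma cross0r {R : realType} (w : 'rV[R]_7) : cross w 0 = 0.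
Proof. vecT. Qed.

Lemma dotC {R : realType} (u v : 'rV[R]_7) : dot u v = dot v u.
Proof. dotT. Qed.
Lemma dotDl {R : realType} (u v w : 'rV[R]_7) : dot (u + v) w = dot u w + dot v w.
Proof. dotT. Qed.
Lemma dotDr {R : realType} (u v w : 'rV[R]_7) : dot w (u + v) = dot w u + dot w v.
Proof. dotT. Qed.
Lemma dotZl {R : realType} a (u w : 'rV[R]_7) : dot (a *: u) w = a * dot u w.
Proof. dotT. Qed.
Lemma dotZr {R : realType} a (u w : 'rV[R]_7) : dot w (a *: u) = a * dot w u.
Proof. dotT. Qed.
Lemma dotNl {R : realType} (u w : 'rV[R]_7) : dot (- u) w = - dot u w.
Proof. dotT. Qed.
Lemma dotNr {R : realType} (u w : 'rV[R]_7) : dot w (- u) = - dot w u.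
Proof. dotT. Qed.
Lemma dot0l {R : realType} (w : 'rV[R]_7) : dot 0 w = 0.
Proof. dotT. Qed.
Lemma dot0r {R : realType} (w : 'rV[R]_7) : dot w 0 = 0.
Proof. dotT. Qed.

Lemma dot_cross_cyc {R : realType} (u v w : 'rV[R]_7) :
  dot (cross u v) w = dot (cross v w) u.
Proof. dotT. Qed.
Lemma dot_crossl {R : realType} (u v : 'rV[R]_7) : dot (cross u v) u = 0.
Proof. dotT. Qed.
Lemma dot_crossr {R : realType} (u v : 'rV[R]_7) : dot (cross u v) v = 0.
Proof. dotT. Qed.
Lemma lagrange {R : realType} (u v w : 'rV[R]_7) :
  dot (cross u w) (cross v w) = dot u v * dot w w - dot u w * dot v w.
Proof. dotT. Qed.
Lemma cross_cross {R : realType} (u v : 'rV[R]_7) :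
  cross u (cross u v) = dot u v *: u - dot u u *: v.
Proof. rewrite !dot7; vecT. Qed.
Lemma cross_pol {R : realType} (u v w : 'rV[R]_7) :
  cross u (cross w v) + cross w (cross u v) =
  dot u v *: w + dot w v *: u - (2 * dot u w) *: v.
Proof. rewrite !dot7; vecT. Qed.

Definition ortho3 {R : realType} (a b c : 'rV[R]_7) : Prop :=
  dot a a = 1 /\ dot b b = 1 /\ dot c c = 1 /\ dot a b = 0 /\
  dot a c = 0 /\ dot b c = 0 /\ dot (cross a b) c = 0.

Lemma line_lem {R : realType} {u v : 'rV[R]_7} :
  dot u u = 1 -> dot v v = 1 -> dot u v = 0 ->
  cross v (cross u v) = u /\ cross (cross u v) u = v.
Proof.
move=> hu hv huv; split.
  rewrite [cross u v]crossC crossNr cross_cross dotC huv hv scale0r scale1r.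
  by rewrite sub0r opprK.
by rewrite crossC cross_cross huv hu scale0r scale1r sub0r opprK.
Qed.

Lemma fr_dots {R : realType} (a b c : 'rV[R]_7) : ortho3 a b c ->
  let ab := cross a b in let ac := cross a c in let bc := cross b c in
  let abc := cross (cross a b) c in
  dot ab ab = 1 /\ dot ac ac = 1 /\ dot bc bc = 1 /\ dot abc abc = 1 /\
  dot a ab = 0 /\ dot b ab = 0 /\ dot a ac = 0 /\ dot c ac = 0 /\
  dot b bc = 0 /\ dot c bc = 0 /\ dot ab abc = 0 /\ dot c abc = 0 /\
  dot ab c = 0 /\ dot b ac = 0 /\ dot a bc = 0 /\
  dot ab ac = 0 /\ dot ab bc = 0 /\ dot ac bc = 0 /\
  dot a abc = 0 /\ dot b abc = 0 /\ dot ac abc = 0 /\ dot bc abc = 0.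
Proof.
move=> [ha [hb [hc [hab [hac [hbc habc]]]]]] ab ac bc abc.
have e1 : dot ab ab = 1 by rewrite /ab lagrange ha hb hab; ring.
have e8 : dot ab ac = 0.
  rewrite /ab /ac [cross a b]crossC [cross a c]crossC dotNl dotNr lagrange.
  by rewrite hbc ha [dot b a]dotC hab [dot c a]dotC hac; ring.
have e9 : dot ab bc = 0.
  rewrite /ab /bc [cross b c]crossC dotNr lagrange hac hb hab [dot c b]dotC hbc; ring.
do 4 (split; first by rewrite ?e1 // lagrange ?ha ?hb ?hc ?hab ?hac ?hbc ?e1 ?habc; ring).
do 8 (split; first by rewrite dotC ?dot_crossl ?dot_crossr).
split; first exact: habc.
split; first by rewrite /ac dotC dot_cross_cyc dot_cross_cyc crossC dotNl habc oppr0.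
split; first by rewrite /bc dotC -dot_cross_cyc habc.
split; first exact: e8.
split; first exact: e9.
split; first by rewrite /ac /bc lagrange hab hc hac hbc; ring.
split; first by rewrite /abc dotC dot_cross_cyc crossC dotNl dotC e8 oppr0.
split; first by rewrite /abc dotC dot_cross_cyc crossC dotNl dotC e9 oppr0.
split; first by rewrite /ac /abc lagrange hc habc -/ab dotC dot_crossl; ring.
by rewrite /bc /abc lagrange hc habc -/ab dotC dot_crossr; ring.
Qed.

Lemma fr_tab {R : realType} (a b c : 'rV[R]_7) : ortho3 a b c ->
  cross a (cross a b) = - b /\
  cross a (cross a c) = - c /\
  cross a (cross b c) = - (cross (cross a b) c) /\
  cross a (cross (cross a b) c) = (cross b c) /\
  cross b a = - (cross a b) /\
  cross b (cross a b) = a /\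
  cross b (cross a c) = (cross (cross a b) c) /\
  cross b (cross b c) = - c /\
  cross b (cross (cross a b) c) = - (cross a c) /\
  cross (cross a b) a = b /\
  cross (cross a b) b = - a /\
  cross (cross a b) (cross a c) = - (cross b c) /\
  cross (cross a b) (cross b c) = (cross a c) /\
  cross (cross a b) (cross (cross a b) c) = - c /\
  cross c a = - (cross a c) /\
  cross c b = - (cross b c) /\
  cross c (cross a b) = - (cross (cross a b) c) /\
  cross c (cross a c) = a /\
  cross c (cross b c) = b /\
  cross c (cross (cross a b) c) = (cross a b) /\
  cross (cross a c) a = c /\
  cross (cross a c) b = - (cross (cross a b) c) /\
  cross (cross a c) (cross a b) = (cross b c) /\
  cross (cross a c) c = - a /\
  cross (cross a c) (cross b c) = - (cross a b) /\
  cross (cross a c) (cross (cross a b) c) = b /\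
  cross (cross b c) a = (cross (cross a b) c) /\
  cross (cross b c) b = c /\
  cross (cross b c) (cross a b) = - (cross a c) /\
  cross (cross b c) c = - b /\
  cross (cross b c) (cross a c) = (cross a b) /\
  cross (cross b c) (cross (cross a b) c) = - a /\
  cross (cross (cross a b) c) a = - (cross b c) /\
  cross (cross (cross a b) c) b = (cross a c) /\
  cross (cross (cross a b) c) (cross a b) = c /\
  cross (cross (cross a b) c) c = - (cross a b) /\
  cross (cross (cross a b) c) (cross a c) = - b /\
  cross (cross (cross a b) c) (cross b c) = a.
Proof.
move=> H; have := @fr_dots _ a b c H; case: H => ha [hb [hc [hab [hac [hbc habc]]]]].
move=> [e1 [e2 [e3 [e4 [e5 [e6 [e7 [e8 [e9 [e10 [e11 [e12 [e13 [e14 [e15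
  [e16 [e17 [e18 [e19 [e20 [e21 e22]]]]]]]]]]]]]]]]]]]]].
have [l012 l120] := line_lem ha hb hab.
have [l034 l340] := line_lem ha hc hac.
have [l135 l351] := line_lem hb hc hbc.
have [l236 l362] := line_lem e1 hc habc.
have d1 : cross (cross b c) a = cross (cross a b) c.
  have P := cross_pol c b a.
  rewrite [dot c b]dotC hbc hab [dot c a]dotC hac !scale0r mulr0 scale0r !subr0 addr0 in P.
  move/eqP: P; rewrite addr_eq0 [cross c b]crossC crossNr opprK => /eqP P.
  by rewrite crossC [cross (cross a b) c]crossC P crossC.
have d2 : cross b (cross a c) = cross (cross a b) c.
  have P := cross_pol b c a.
  rewrite hbc hac [dot b a]dotC hab !scale0r mulr0 scale0r !subr0 addr0 in P.
  move/eqP: P; rewrite addr_eq0 => /eqP ->.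
  by rewrite -d1 [cross (cross b c) a]crossC.
have d3 : cross (cross a b) (cross b c) = cross a c.
  have P := cross_pol (cross b c) b a.
  rewrite dot_crossl hab [dot (cross b c) a]dotC e15 !scale0r mulr0 scale0r !subr0 addr0 in P.
  move/eqP: P; rewrite addr_eq0 l351 => /eqP P.
  by rewrite crossC P opprK.
have [l506 l650] := line_lem e3 ha (etrans (dotC _ _) e15).
rewrite d1 in l506 l650.
have [l146 l461] := line_lem hb e2 e14.
rewrite d2 in l146 l461.
have [l254 l542] := line_lem e1 e3 e17.
rewrite d3 in l254 l542.
repeat split; rewrite ?d1 ?d2 ?d3 ?l012 ?l120 ?l034 ?l340 ?l135 ?l351 ?l236 ?l362
  ?l506 ?l650 ?l146 ?l461 ?l254 ?l542 //;
  rewrite crossC ?d1 ?d2 ?d3 ?l012 ?l120 ?l034 ?l340 ?l135 ?l351 ?l236 ?l362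
  ?l506 ?l650 ?l146 ?l461 ?l254 ?l542 //.
Qed.

Definition frv {R : realType} (a b c : 'rV[R]_7) (n : nat) : 'rV[R]_7 :=
  match n with 0 => a | 1 => b | 2 => cross a b | 3 => c | 4 => cross a c
  | 5 => cross b c | _ => cross (cross a b) c end.
Definition frm {R : realType} (a b c : 'rV[R]_7) : 'M[R]_7 :=
  \matrix_(i < 7, j < 7) frv a b c i 0 j.

Lemma row_frm {R : realType} (a b c : 'rV[R]_7) (i : 'I_7) :
  row i (frm a b c) = frv a b c i.
Proof. by apply/rowP => j; rewrite !mxE. Qed.

Lemma mul_frm {R : realType} (a b c x : 'rV[R]_7) :
  x *m frm a b c = crd x 0 *: a + crd x 1 *: b + crd x 2 *: cross a b + crd x 3 *: c
    + crd x 4 *: cross a c + crd x 5 *: cross b c + crd x 6 *: cross (cross a b) c.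
Proof.
rewrite mulmx_sum_row !big_ord_recl big_ord0 !row_frm !crdE /bump /=; rewrite /bump /=.
by rewrite addr0 !addrA.
Qed.

Lemma frm_cross {R : realType} (a b c : 'rV[R]_7) : ortho3 a b c ->
  forall x y, cross (x *m frm a b c) (y *m frm a b c) = cross x y *m frm a b c.
Proof.
move=> H x y.
move: (@fr_tab _ a b c H) => [t02 [t04 [t05 [t06 [t10 [t12 [t14 [t15 [t16 [t20 [t21 [t24 [t25 [t26 [t30 [t31 [t32 [t34 [t35 [t36 [t40 [t41 [t42 [t43 [t45 [t46 [t50 [t51 [t52 [t53 [t54 [t56 [t60 [t61 [t62 [t63 [t64 [t65 ]]]]]]]]]]]]]]]]]]]]]]]]]]]]]]]]]]]]]].
rewrite !mul_frm.
rewrite crd_cross0 crd_cross1 crd_cross2 crd_cross3 crd_cross4 crd_cross5 crd_cross6.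
rewrite !(crossDl, crossDr, crossZl, crossZr) !crossxx.
rewrite t02 t04 t05 t06 t10 t12 t14 t15 t16 t20 t21 t24 t25 t26 t30 t31 t32 t34 t35 t36 t40 t41 t42 t43 t45 t46 t50 t51 t52 t53 t54 t56 t60 t61 t62 t63 t64 t65.
set ab := cross a b; set ac := cross a c; set bc := cross b c; set abc := cross ab c.
apply: crd_ext; rewrite !(crdD, crdZ, crdN, crd0); ring.
Qed.

Lemma frm_orth {R : realType} (a b c : 'rV[R]_7) : ortho3 a b c ->
  frm a b c *m (frm a b c)^T = 1.
Proof.
move=> H; have := @fr_dots _ a b c H; case: H => ha [hb [hc [hab [hac [hbc habc]]]]].
move=> [e1 [e2 [e3 [e4 [e5 [e6 [e7 [e8 [e9 [e10 [e11 [e12 [e13 [e14 [e15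
  [e16 [e17 [e18 [e19 [e20 [e21 e22]]]]]]]]]]]]]]]]]]]]].
apply/matrixP => i j; rewrite !mxE.
have -> : \sum_k frm a b c i k * (frm a b c)^T k j = dot (frv a b c i) (frv a b c j).
  by apply: eq_bigr => k _; rewrite !mxE crdE.
rewrite -val_eqE.
case: i => [[|[|[|[|[|[|[|i]]]]]]]] Hi //; case: j => [[|[|[|[|[|[|[|j]]]]]]]] Hj //=;
 rewrite ?mulr1n ?mulr0n;
 first [ by rewrite ?ha ?hb ?hc ?hab ?hac ?hbc ?habc ?e1 ?e2 ?e3 ?e4 ?e5 ?e6 ?e7 ?e8 ?e9 ?e10
   ?e11 ?e12 ?e13 ?e14 ?e15 ?e16 ?e17 ?e18 ?e19 ?e20 ?e21 ?e22
 | by rewrite dotC ?ha ?hb ?hc ?hab ?hac ?hbc ?habc ?e1 ?e2 ?e3 ?e4 ?e5 ?e6 ?e7 ?e8 ?e9 ?e10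
   ?e11 ?e12 ?e13 ?e14 ?e15 ?e16 ?e17 ?e18 ?e19 ?e20 ?e21 ?e22 ].
Qed.

Lemma dotE {R : realType} (u v : 'rV[R]_7) : dot u v = (u *m v^T) 0 0.
Proof. by rewrite /dot !mxE; apply: eq_bigr => i _; rewrite mxE. Qed.

Lemma dot_ge0 {R : realType} (u : 'rV[R]_7) : 0 <= dot u u.
Proof. by rewrite /dot; apply: sumr_ge0 => i _; rewrite -expr2 sqr_ge0. Qed.

Lemma dot_eq0 {R : realType} (u : 'rV[R]_7) : dot u u = 0 -> u = 0.
Proof.
rewrite /dot => h; apply/rowP => i; rewrite mxE.
have hi : u 0 i * u 0 i = 0.
  move: i isT; apply: (psumr_eq0P _ h) => j _; by rewrite -expr2 sqr_ge0.
by move/eqP: hi; rewrite mulf_eq0 orbb => /eqP.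
Qed.

Lemma rank_lt7_ker {R : realType} (S : 'M[R]_7) : (\rank S < 7)%N ->
  exists2 x : 'rV[R]_7, x != 0 & x *m S = 0.
Proof.
move=> hr; apply/det0P; apply: contraLR hr => hd.
have hu : S \in unitmx by rewrite unitmxE unitfE.
by rewrite mxrank_unit.
Qed.

Lemma rank_sum_sq {R : realType} (s : seq 'rV[R]_7) :
  (\rank (\sum_(a <- s) a^T *m a)%R <= size s)%N.
Proof.
elim: s => [|a s IH]; first by rewrite big_nil mxrank0.
rewrite big_cons /=; apply: (leq_trans (mxrank_add _ _)).
rewrite -[X in (_ <= X)%N]add1n; apply: (leq_add _ IH).
apply: (leq_trans (mxrankM_maxl _ _)); exact: rank_leq_col.
Qed.

Lemma dot_mul_sq {R : realType} (x a : 'rV[R]_7) :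
  dot (x *m (a^T *m a)) x = dot x a ^+ 2.
Proof.
rewrite !dotE.
have -> : x *m (a^T *m a) *m x^T = (x *m a^T) *m (a *m x^T) by rewrite !mulmxA.
have -> : a *m x^T = (x *m a^T)^T by rewrite trmx_mul trmxK.
rewrite mxE big_ord1 expr2 [(x *m a^T)^T _ _]mxE; congr (_ * _); rewrite !mxE; apply: eq_bigr => j _; rewrite !mxE.
Qed.

Lemma normalize {R : realType} (x : 'rV[R]_7) : x != 0 ->
  exists k : R, k != 0 /\ dot (k *: x) (k *: x) = 1.
Proof.
move=> nx.
have hp : 0 < dot x x.
  rewrite lt_def dot_ge0 andbT; apply: contra nx => /eqP /dot_eq0 ->; exact: eqxx.
exists (Num.sqrt (dot x x))^-1; split.
  by rewrite invr_eq0 gt_eqF // sqrtr_gt0.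
rewrite dotZl dotZr mulrA -expr2 exprVn sqr_sqrtr ?ltW // mulVf //.
by rewrite gt_eqF.
Qed.

Lemma orth_kernel {R : realType} (A : 'M[R]_7) (s : seq 'rV[R]_7) :
  (\rank A + size s < 7)%N ->
  exists z : 'rV[R]_7, dot z z = 1 /\ z *m A = 0 /\ (forall a, a \in s -> dot z a = 0).
Proof.
move=> hr.
pose S := A *m A^T + \sum_(a <- s) a^T *m a.
have hS : (\rank S < 7)%N.
  apply: (leq_ltn_trans (mxrank_add _ _)); apply: leq_ltn_trans hr.
  by rewrite leq_add // ?rank_sum_sq // mxrankM_maxl.
have [x nx xS] := rank_lt7_ker _ hS.
have key : dot (x *m A) (x *m A) + \sum_(a <- s) dot x a ^+ 2 = 0.
  have : dot (x *m S) x = 0 by rewrite xS /dot big1 // => i _; rewrite mxE mul0r.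
  rewrite /S mulmxDr mulmx_sumr.
  have -> : forall u v w : 'rV[R]_7, dot (u + v) w = dot u w + dot v w.
    by move=> u v w; rewrite /dot -big_split; apply: eq_bigr => i _; rewrite mxE mulrDl.
  have -> : forall (t : seq 'rV[R]_7) (F : 'rV[R]_7 -> 'rV[R]_7) w,
      dot (\sum_(a <- t) F a) w = \sum_(a <- t) dot (F a) w.
    move=> t F w; elim: t => [|b t IH]; first by rewrite !big_nil /dot big1 // => i _; rewrite mxE mul0r.
    by rewrite !big_cons -IH /dot -big_split; apply: eq_bigr => i _; rewrite mxE mulrDl.
  rewrite (eq_bigr (fun a => dot x a ^+ 2)) => [|a _]; last exact: dot_mul_sq.
  rewrite !dotE trmx_mul !mulmxA; exact: id.
have h1 : 0 <= dot (x *m A) (x *m A) := dot_ge0 _.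
have h2 : 0 <= \sum_(a <- s) dot x a ^+ 2 by apply: sumr_ge0 => a _; exact: sqr_ge0.
have e1 : dot (x *m A) (x *m A) = 0.
  by apply/eqP; rewrite eq_le h1 andbT -(addr0 (dot _ _)) -[X in _ <= X]key lerD2l.
have e2 : \sum_(a <- s) dot x a ^+ 2 = 0 by move: key; rewrite e1 add0r.
have [k [nk hk]] := normalize _ nx.
exists (k *: x); split => //; split.
  by rewrite -scalemxAl (dot_eq0 _ e1) scaler0.
move=> a ha; rewrite dotZl.
have : dot x a ^+ 2 = 0.
  move/eqP: e2; rewrite psumr_eq0 => [/allP /(_ a ha) /implyP /(_ isT) /eqP //|b _]; exact: sqr_ge0.
by move/eqP; rewrite sqrf_eq0 => /eqP ->; rewrite mulr0.
Qed.

Definition pres {R : realType} (A : 'M[R]_7) :=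
  forall x y : 'rV[R]_7, cross (x *m A) (y *m A) = cross x y *m A.
Definition orthm {R : realType} (A : 'M[R]_7) := A *m A^T = 1%:M.

Lemma orthm_tr {R : realType} (A : 'M[R]_7) : orthm A -> A^T *m A = 1%:M.
Proof. exact: mulmx1C. Qed.

Lemma orthm_mul {R : realType} (A B : 'M[R]_7) : orthm A -> orthm B -> orthm (A *m B).
Proof.
move=> hA hB; rewrite /orthm trmx_mul mulmxA -(mulmxA A) hB mulmx1; exact: hA.
Qed.

Lemma orthm_trm {R : realType} (A : 'M[R]_7) : orthm A -> orthm A^T.
Proof. by move=> hA; rewrite /orthm trmxK (mulmx1C hA). Qed.

Lemma pres_mul {R : realType} (A B : 'M[R]_7) : pres A -> pres B -> pres (A *m B).
Proof. by move=> hA hB x y; rewrite !mulmxA hB hA. Qed.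

Lemma pres_tr {R : realType} (A : 'M[R]_7) : orthm A -> pres A -> pres A^T.
Proof.
move=> hA hP x y.
have hT : A^T *m A = 1%:M := mulmx1C hA.
rewrite -[cross (x *m A^T) (y *m A^T)]mulmx1 -hA mulmxA -hP -!mulmxA hT !mulmx1.
by [].
Qed.

Lemma dot_orthm {R : realType} (A : 'M[R]_7) x y : orthm A -> dot (x *m A) (y *m A) = dot x y.
Proof. by move=> hA; rewrite !dotE trmx_mul !mulmxA -(mulmxA x) hA mulmx1. Qed.

Lemma det_orthm {R : realType} (A : 'M[R]_7) : orthm A -> \det A = 1 \/ \det A = -1.
Proof.
move=> hA; have : \det A * \det A = 1.
  by rewrite -{2}(det_tr A) -det_mulmx hA det1.
move=> h; have : (\det A - 1) * (\det A + 1) = 0 by rewrite mulrDr !mulrBl h; ring.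
by move/eqP; rewrite mulf_eq0 subr_eq0 addr_eq0 => /orP [/eqP -> | /eqP ->]; [left|right].
Qed.

Lemma detN7 {R : realType} (A : 'M[R]_7) : \det (- A) = - \det A.
Proof.
have e : (-1 : R) ^+ 7 = -1 by rewrite !exprS expr0; ring.
by rewrite -scaleN1r detZ e mulN1r.
Qed.
Lemma eig_m1 {R : realType} (A : 'M[R]_7) : orthm A -> \det A = -1 ->
  exists2 v : 'rV[R]_7, v != 0 & v *m A = - v.
Proof.
move=> hA hd.
have e1 : A + 1%:M = A *m (1%:M + A^T) by rewrite mulmxDr mulmx1 hA.
have e2 : (1%:M + A^T) = (1%:M + A)^T by rewrite linearD /= trmx1.
have : \det (A + 1%:M) = 0.
  have h : \det (A + 1%:M) = - \det (A + 1%:M).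
    by rewrite {1}e1 det_mulmx hd e2 det_tr addrC mulN1r.
  lra.
move/eqP/det0P => [v nv hv]; exists v => //.
by apply/eqP; rewrite -addr_eq0 -{2}(mulmx1 v) -mulmxDr hv.
Qed.

Lemma eig_p1 {R : realType} (A : 'M[R]_7) : orthm A -> \det A = 1 ->
  exists2 v : 'rV[R]_7, v != 0 & v *m A = v.
Proof.
move=> hA hd.
have e1 : A - 1%:M = A *m (1%:M - A^T) by rewrite mulmxBr mulmx1 hA.
have e2 : (1%:M - A^T) = (1%:M - A)^T by rewrite linearB /= trmx1.
have : \det (A - 1%:M) = 0.
  have h : \det (A - 1%:M) = - \det (A - 1%:M).
    by rewrite {1}e1 det_mulmx hd e2 det_tr mul1r -detN7 opprB.
  lra.
move/eqP/det0P => [v nv hv]; exists v => //.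
by apply/eqP; rewrite -subr_eq0 -{2}(mulmx1 v) -mulmxBr hv.
Qed.

Definition mk7 {R : realType} (f : nat -> 'rV[R]_7) : 'M[R]_7 :=
  \matrix_(i < 7, j < 7) f i 0 j.

Lemma mul_mk7 {R : realType} (f : nat -> 'rV[R]_7) x :
  x *m mk7 f = crd x 0 *: f 0%N + crd x 1 *: f 1%N + crd x 2 *: f 2%N + crd x 3 *: f 3%N
    + crd x 4 *: f 4%N + crd x 5 *: f 5%N + crd x 6 *: f 6%N.
Proof.
have rw : forall i : 'I_7, row i (mk7 f) = f i by move=> i; apply/rowP => j; rewrite !mxE.
rewrite mulmx_sum_row !big_ord_recl big_ord0 !rw !crdE /bump /=; rewrite /bump /=.
by rewrite addr0 !addrA.
Qed.

Lemma crd_mul_tr {R : realType} (f : nat -> 'rV[R]_7) y n : (n < 7)%N ->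
  crd (y *m (mk7 f)^T) n = dot y (f n).
Proof.
move=> hn; rewrite /crd /dot !mxE; apply: eq_bigr => j _; rewrite !mxE inordK //.
Qed.

Lemma expand_orth {R : realType} (f : nat -> 'rV[R]_7) y : orthm (mk7 f) ->
  y = dot y (f 0%N) *: f 0%N + dot y (f 1%N) *: f 1%N + dot y (f 2%N) *: f 2%N
    + dot y (f 3%N) *: f 3%N + dot y (f 4%N) *: f 4%N + dot y (f 5%N) *: f 5%N
    + dot y (f 6%N) *: f 6%N.
Proof.
move=> h; have h2 := orthm_tr _ h.
rewrite -{1}(mulmx1 y) -h2 mulmxA mul_mk7 !crd_mul_tr //.
Qed.

Definition sK (n : nat) : nat := match n with 0 | 2 | 4 | 6 => 0 | _ => 1 end.
Definition dK {R : realType} : 'rV[R]_7 := \row_(j < 7) (if sK j == 0%N then -1 else 1).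
Definition dD {R : realType} : 'rV[R]_7 := \row_(j < 7) (if j == 0 :> nat then -1 else 1).

Lemma crd_mul_diag {R : realType} (x d : 'rV[R]_7) n : crd (x *m diag_mx d) n = crd x n * crd d n.
Proof. by rewrite /crd mul_mx_diag mxE. Qed.

Lemma orthm_diag {R : realType} (d : 'rV[R]_7) : (forall i, d 0 i * d 0 i = 1) -> orthm (diag_mx d).
Proof.
move=> h; rewrite /orthm tr_diag_mx mul_diag_mx; apply/matrixP => i j; rewrite !mxE.
case: (eqVneq i j) => [->|nij]; first by rewrite ?eqxx !mulr1n h.
by rewrite !mulr0n mulr0.
Qed.

Lemma crd_dK {R : realType} n : (n < 7)%N -> crd (@dK R) n = if sK n == 0%N then -1 else 1.
Proof. by move=> hn; rewrite /crd mxE inordK. Qed.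
Lemma crd_dD {R : realType} n : (n < 7)%N -> crd (@dD R) n = if n == 0%N then -1 else 1.
Proof. by move=> hn; rewrite /crd mxE inordK. Qed.

Lemma K_orth {R : realType} : orthm (diag_mx (@dK R)).
Proof. apply: orthm_diag => i; rewrite mxE; case: ifP => _; ring. Qed.
Lemma D_orth {R : realType} : orthm (diag_mx (@dD R)).
Proof. apply: orthm_diag => i; rewrite mxE; case: ifP => _; ring. Qed.

Lemma K_pres {R : realType} : pres (diag_mx (@dK R)).
Proof.
move=> x y; apply: crd_ext; rewrite !crd_mul_diag; crdS; rewrite !crd_mul_diag !crd_dK //=; ring.
Qed.

Lemma K_det {R : realType} : \det (diag_mx (@dK R)) = 1.
Proof. rewrite det_diag !big_ord_recl big_ord0 !mxE /bump /=; ring. Qed.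
Lemma D_det {R : realType} : \det (diag_mx (@dD R)) = -1.
Proof. rewrite det_diag !big_ord_recl big_ord0 !mxE /bump /=; ring. Qed.
Definition nf {R : realType} (p q : R) (i j : nat) : R :=
  match i, j with
  | 0, 0 => 1 | 1, 1 => -1 | 2, 2 => -1 | 3, 3 => 1 | 4, 4 => 1
  | 5, 5 => p | 5, 6 => q | 6, 5 => - q | 6, 6 => p
  | _, _ => 0 end.

Lemma det2f (R : comNzRingType) (f : nat -> nat -> R) :
  \det (\matrix_(i < 2, j < 2) f i j) = f 0 0 * f 1 1 - f 0 1 * f 1 0.
Proof.
do 3 (rewrite ?expand_f ?det0f ?big_ord_recl ?big_ord0).
rewrite /shiftf /bump /=; rewrite /bump /=. ring.
Qed.

Lemma det_nf {R : realType} (p q : R) :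
  \det (\matrix_(i < 7, j < 7) nf p q i j) = p * p + q * q.
Proof.
have -> : \matrix_(i < 7, j < 7) nf p q i j =
   block_mx (diag_mx (\row_(i < 5) nf p q i i)) 0 0
            (\matrix_(i < 2, j < 2) nf p q (5 + i) (5 + j)) :> 'M_(5 + 2).
  apply/matrixP => i j.
  rewrite -(@splitK 5 2 i) -(@splitK 5 2 j); case: (split i) => i1; case: (split j) => j1;
    rewrite ?block_mxEul ?block_mxEur ?block_mxEdl ?block_mxEdr !mxE /=.
  - by case: i1 => [[|[|[|[|[|k]]]]]] Hk //; case: j1 => [[|[|[|[|[|l]]]]]] Hl.
  - by case: i1 => [[|[|[|[|[|k]]]]]] Hk //; case: j1 => [[|[|l]]] Hl.
  - by case: i1 => [[|[|k]]] Hk //; case: j1 => [[|[|[|[|[|l]]]]]] Hl.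
  - by case: i1 => [[|[|k]]] Hk //; case: j1 => [[|[|l]]] Hl.
have h := det_ublock (diag_mx (\row_(i < 5) nf p q i i)) 0 (\matrix_(i < 2, j < 2) nf p q (5 + i) (5 + j)).
apply: (etrans h).
rewrite det_diag !big_ord_recl big_ord0 !mxE /bump /=.
rewrite (det2f _ (fun a b => nf p q (5 + a) (5 + b))) /=.
ring.
Qed.
Lemma mk7_orth {R : realType} (f : nat -> 'rV[R]_7) :
  (forall i j : 'I_7, dot (f i) (f j) = (i == j)%:R) -> orthm (mk7 f).
Proof.
move=> h; apply/matrixP => i j; rewrite !mxE.
have -> : \sum_k mk7 f i k * (mk7 f)^T k j = dot (f i) (f j).
  by apply: eq_bigr => k _; rewrite !mxE crdE.
exact: h.
Qed.

Lemma Jlag {R : realType} (e x y : 'rV[R]_7) :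
  dot (cross e x) (cross e y) = dot x y * dot e e - dot x e * dot y e.
Proof. dotT. Qed.
Lemma Jskew {R : realType} (e x y : 'rV[R]_7) : dot x (cross e y) = - dot (cross e x) y.
Proof. dotT. Qed.
Lemma Jself {R : realType} (e x : 'rV[R]_7) : dot x (cross e x) = 0.
Proof. dotT. Qed.
Lemma Je {R : realType} (e x : 'rV[R]_7) : dot e (cross e x) = 0.
Proof. dotT. Qed.

Lemma crd_rowm {R : realType} (f : nat -> nat -> R) (i : 'I_7) n : (n < 7)%N ->
  crd (row i (\matrix_(a < 7, b < 7) f a b)) n = f i n.
Proof. by move=> hn; rewrite /crd !mxE inordK. Qed.

Lemma neg_self {R : realType} (x : R) : - x = x -> x = 0.
Proof. move=> h; lra. Qed.

Lemma orth_kernel0 {R : realType} (s : seq 'rV[R]_7) : (size s < 7)%N ->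
  exists z : 'rV[R]_7, dot z z = 1 /\ (forall a, a \in s -> dot z a = 0).
Proof.
move=> hs; have hr : (\rank (0 : 'M[R]_7)%R + size s < 7)%N by rewrite mxrank0.
have [z [h1 [_ h3]]] := orth_kernel _ _ hr.
by exists z.
Qed.
Lemma g2_det {R : realType} (A : 'M[R]_7) : orthm A -> pres A -> \det A = 1.
Proof.
move=> hA hP.
case: (det_orthm _ hA) => // hd; exfalso.
pose e0 : 'rV[R]_7 := delta_mx 0 (inord 0).
have ce0 : forall n, (n < 7)%N -> crd e0 n = (n == 0%N)%:R.
  by move=> n hn; rewrite /e0 crd_delta.
have f00 : dot e0 e0 = 1 by rewrite dot7 !ce0 //=; ring.
have [v0 nv0 hv0] := eig_m1 _ hA hd.
have [k [nk hk]] := normalize _ nv0.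
pose v := k *: v0.
have hv : v *m A = - v by rewrite /v -scalemxAl hv0 scalerN.
have [w [hw hwv]] := orth_kernel0 [:: v] isT.
have [z [hz hzs]] := orth_kernel0 [:: v; w; cross v w] isT.
have H3 : ortho3 v w z.
  split; first exact: hk.
  split; first exact: hw.
  split; first exact: hz.
  split; first by rewrite dotC hwv ?mem_head.
  split; first by rewrite dotC hzs // !inE eqxx.
  split; first by rewrite dotC hzs // !inE eqxx ?orbT.
  by rewrite dotC hzs // !inE eqxx ?orbT.
pose F := frm v w z.
have hF : orthm F by exact: frm_orth H3.
have hFP : pres F by exact: frm_cross H3.
have he0F : e0 *m F = v.
  by rewrite /F mul_frm !ce0 //= scale1r !scale0r !addr0.
pose M := F *m A *m F^T.
have hM : orthm M by apply: orthm_mul; [apply: orthm_mul|apply: orthm_trm].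
have hMP : pres M by apply: pres_mul; [apply: pres_mul|apply: pres_tr].
have he0M : e0 *m M = - e0.
  by rewrite /M !mulmxA he0F hv mulNmx -he0F -mulmxA hF mulmx1.
pose K := diag_mx (@dK R).
pose L := M *m K.
have hL : orthm L by apply: orthm_mul => //; exact: K_orth.
have hLP : pres L by apply: pres_mul => //; exact: K_pres.
have he0K : e0 *m K = - e0.
  apply: crd_ext; rewrite !crd_mul_diag !crdN !ce0 // !crd_dK //=; ring.
have he0L : e0 *m L = e0 by rewrite /L mulmxA he0M mulNmx he0K opprK.
have detF : \det F * \det F = 1.
  by rewrite -{2}(det_tr F) -det_mulmx hF det1.
have detL : \det L = -1.
  rewrite /L /M !det_mulmx det_tr hd K_det.
  transitivity (- (\det F * \det F)); first ring.
  by rewrite detF.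
have [u0 nu0 hu0] := eig_m1 _ hL detL.
have [ku [nku hu1]] := normalize _ nu0.
pose u := ku *: u0.
have hu : u *m L = - u by rewrite /u -scalemxAl hu0 scalerN.
have f01 : dot e0 u = 0.
  apply: neg_self; have := dot_orthm _ e0 u hL; by rewrite hu he0L dotNr.
pose D := diag_mx (@dD R).
have hL2 : orthm (D *m L) by apply: orthm_mul => //; exact: D_orth.
have detL2 : \det (D *m L) = 1 by rewrite det_mulmx D_det detL; ring.
have [w0 nw0 hw0] := eig_p1 _ hL2 detL2.
have [kw [nkw hw1]] := normalize _ nw0.
pose w1 := kw *: w0.
have hw' : w1 *m (D *m L) = w1 by rewrite /w1 -scalemxAl hw0.
have he0D : e0 *m D = - e0.
  apply: crd_ext; rewrite !crd_mul_diag !crdN !ce0 // !crd_dD //=; ring.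
have f03 : dot e0 w1 = 0.
  apply: neg_self; have := dot_orthm _ e0 w1 hL2; by rewrite hw' mulmxA he0D mulNmx he0L dotNl.
have cw0 : crd w1 0 = 0 by rewrite -f03 dot7 !ce0 //=; ring.
have hwD : w1 *m D = w1.
  apply: crd_ext; rewrite !crd_mul_diag !crd_dD //= ?cw0; ring.
have hwL : w1 *m L = w1 by rewrite mulmxA hwD in hw'.
pose uJ := cross e0 u.
pose wJ := cross e0 w1.
have huJ : uJ *m L = - uJ by rewrite /uJ -hLP he0L hu crossNr.
have hwJ : wJ *m L = wJ by rewrite /wJ -hLP he0L hwL.
have [z1 [hz1 hzs1]] := orth_kernel0 [:: e0; u; uJ; w1; wJ] isT.
pose zJ := cross e0 z1.
have f05 : dot e0 z1 = 0 by rewrite dotC hzs1 // !inE eqxx.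
have f15 : dot u z1 = 0 by rewrite dotC hzs1 // !inE eqxx ?orbT.
have f25 : dot uJ z1 = 0 by rewrite dotC hzs1 // !inE eqxx ?orbT.
have f35 : dot w1 z1 = 0 by rewrite dotC hzs1 // !inE eqxx ?orbT.
have f45 : dot wJ z1 = 0 by rewrite dotC hzs1 // !inE eqxx ?orbT.
have f02 : dot e0 uJ = 0 by rewrite Je.
have f04 : dot e0 wJ = 0 by rewrite Je.
have f06 : dot e0 zJ = 0 by rewrite Je.
have f12 : dot u uJ = 0 by rewrite Jself.
have f34 : dot w1 wJ = 0 by rewrite Jself.
have f56 : dot z1 zJ = 0 by rewrite Jself.
have f13 : dot u w1 = 0.
  apply: neg_self; have := dot_orthm _ u w1 hL; by rewrite hu hwL dotNl.
have f23 : dot uJ w1 = 0.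
  apply: neg_self; have := dot_orthm _ uJ w1 hL; by rewrite huJ hwL dotNl.
have f14 : dot u wJ = 0 by rewrite Jskew -/uJ f23 oppr0.
have f16 : dot u zJ = 0 by rewrite Jskew -/uJ f25 oppr0.
have f36 : dot w1 zJ = 0 by rewrite Jskew -/wJ f45 oppr0.
have f22 : dot uJ uJ = 1 by rewrite Jlag f00 hu1 [dot u e0]dotC f01; ring.
have f44 : dot wJ wJ = 1 by rewrite Jlag f00 hw1 [dot w1 e0]dotC f03; ring.
have f66 : dot zJ zJ = 1 by rewrite Jlag f00 hz1 [dot z1 e0]dotC f05; ring.
have f24 : dot uJ wJ = 0 by rewrite Jlag f13 [dot u e0]dotC f01; ring.
have f26 : dot uJ zJ = 0 by rewrite Jlag f15 [dot u e0]dotC f01; ring.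
have f46 : dot wJ zJ = 0 by rewrite Jlag f35 [dot w1 e0]dotC f03; ring.
pose gf (n : nat) := match n with 0 => e0 | 1 => u | 2 => uJ | 3 => w1 | 4 => wJ
  | 5 => z1 | _ => zJ end.
have hG : orthm (mk7 gf).
  apply: mk7_orth => i j; rewrite -val_eqE.
  case: i => [[|[|[|[|[|[|[|i]]]]]]]] Hi //; case: j => [[|[|[|[|[|[|[|j]]]]]]]] Hj //=;
  rewrite ?mulr1n ?mulr0n;
  first [ by rewrite ?f00 ?f01 ?f02 ?f03 ?f04 ?f05 ?f06 ?hu1 ?f12 ?f13 ?f14 ?f15 ?f16
     ?f22 ?f23 ?f24 ?f25 ?f26 ?hw1 ?f34 ?f35 ?f36 ?f44 ?f45 ?f46 ?hz1 ?f56 ?f66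
  | by rewrite dotC ?f00 ?f01 ?f02 ?f03 ?f04 ?f05 ?f06 ?hu1 ?f12 ?f13 ?f14 ?f15 ?f16
     ?f22 ?f23 ?f24 ?f25 ?f26 ?hw1 ?f34 ?f35 ?f36 ?f44 ?f45 ?f46 ?hz1 ?f56 ?f66 ].
pose y := z1 *m L.
have dy0 : dot y e0 = 0.
  have h := dot_orthm _ z1 e0 hL; rewrite he0L in h; by rewrite /y h dotC f05.
have dyu : dot y u = 0.
  have h := dot_orthm _ z1 u hL; rewrite hu dotNr [dot z1 u]dotC f15 in h.
  by move/eqP: h; rewrite oppr_eq0 => /eqP.
have dyuJ : dot y uJ = 0.
  have h := dot_orthm _ z1 uJ hL; rewrite huJ dotNr [dot z1 uJ]dotC f25 in h.
  by move/eqP: h; rewrite oppr_eq0 => /eqP.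
have dyw : dot y w1 = 0.
  have h := dot_orthm _ z1 w1 hL; rewrite hwL [dot z1 w1]dotC f35 in h; exact: h.
have dywJ : dot y wJ = 0.
  have h := dot_orthm _ z1 wJ hL; rewrite hwJ [dot z1 wJ]dotC f45 in h; exact: h.
have hy : y = dot y z1 *: z1 + dot y zJ *: zJ.
  have h := expand_orth gf y hG; rewrite /gf /= dy0 dyu dyuJ dyw dywJ !scale0r !add0r in h.
  exact: h.
move: hy; set p := dot y z1; set q := dot y zJ => hy.
have hzJ : zJ *m L = p *: zJ - q *: z1.
  rewrite /zJ -hLP he0L -/y hy crossDr !crossZr -/zJ cross_cross f00 f05 scale0r scale1r.
  by rewrite sub0r scalerN.
have hNG : mk7 gf *m L = (\matrix_(i < 7, j < 7) nf p q i j) *m mk7 gf.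
  apply/row_matrixP => i; rewrite !row_mul mul_mk7 !crd_rowm //.
  have -> : row i (mk7 gf) = gf i by apply/rowP => j; rewrite !mxE.
  case: i => [[|[|[|[|[|[|[|i]]]]]]]] Hi //=; rewrite /gf /=;
  rewrite ?he0L ?hu ?huJ ?hwL ?hwJ -?/y ?hy ?hzJ;
  apply: crd_ext; rewrite !(crdD, crdZ, crdN, crdB, crd0); ring.
clearbody L.
have h : \det (mk7 gf *m L *m (mk7 gf)^T) = -1.
  rewrite !det_mulmx det_tr detL.
  have hd2 : \det (mk7 gf) * \det (mk7 gf) = 1.
    by rewrite -{2}(det_tr (mk7 gf)) -det_mulmx hG det1.
  transitivity (- (\det (mk7 gf) * \det (mk7 gf))); first ring.
  by rewrite hd2.
rewrite hNG -mulmxA hG mulmx1 det_nf in h.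
have h1 : 0 <= p * p by rewrite -expr2 sqr_ge0.
have h2 : 0 <= q * q by rewrite -expr2 sqr_ge0.
lra.
Qed.

Lemma frame_vec_frm {R : realType} (a b c : 'rV[R]_7) n : (n < 7)%N ->
  frame_vec (frm a b c) n = frv a b c n.
Proof. by move=> hn; apply/rowP => j; rewrite /frame_vec !mxE inordK. Qed.

Lemma ed {R : realType} n : (n < 7)%N -> forall m, (m < 7)%N ->
  crd (delta_mx 0 (inord n) : 'rV[R]_7) m = (m == n)%:R.
Proof. by move=> hn m hm; rewrite crd_delta. Qed.

Definition ek {R : realType} (n : nat) : 'rV[R]_7 := delta_mx 0 (inord n).
Arguments ek : simpl never.

Lemma crd_ek {R : realType} n m : (n < 7)%N -> (m < 7)%N -> crd (@ek R n) m = (m == n)%:R.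
Proof. by move=> hn hm; rewrite /ek crd_delta. Qed.

Theorem corollary3p2 (R : realType) (X : 'M[R]_7) :
  in_g2 X -> (\rank X <= 4)%N ->
  exists E : 'M[R]_7, G2_adapted E /\
    exists a b c : R, mx_in_frame X E = normal_form a b c.
Proof.
move=> [hsk hder] hr.
have hr0 : (\rank X + size ([::] : seq 'rV[R]_7) < 7)%N by rewrite /=; lia.
have [e1 [h1 [h1X _]]] := orth_kernel X [::] hr0.
have hr1 : (\rank X + size [:: e1] < 7)%N by rewrite /=; lia.
have [e2 [h2 [h2X h2s]]] := orth_kernel X [:: e1] hr1.
have h12 : dot e1 e2 = 0 by rewrite dotC h2s ?mem_head.
pose e3 := cross e1 e2.
have h3X : e3 *m X = 0 by rewrite /e3 hder h1X h2X cross0l cross0r addr0.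
have [e4 [h4 h4s]] := orth_kernel0 [:: e1; e2; e3] isT.
have H3 : ortho3 e1 e2 e4.
  split; first exact: h1.
  split; first exact: h2.
  split; first exact: h4.
  split; first exact: h12.
  split; first by rewrite dotC h4s // !inE eqxx.
  split; first by rewrite dotC h4s // !inE eqxx ?orbT.
  by rewrite dotC h4s // !inE eqxx ?orbT.
pose E := frm e1 e2 e4.
have hE : orthm E by exact: frm_orth H3.
have hEP : pres E by exact: frm_cross H3.
exists E; split.
  split.
    move=> i j; have := congr1 (fun M : 'M[R]_7 => M i j) hE; rewrite !mxE => <-.
    by rewrite /dot; apply: eq_bigr => k _; rewrite !mxE.
  split; first by rewrite (g2_det _ hE hEP) ltr01.
  by rewrite /E !frame_vec_frm.
pose Y := E *m X *m E^T.
have hYt : Y^T = - Y by rewrite /Y !trmx_mul trmxK hsk mulNmx mulmxN mulmxA.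
have hEt : pres E^T := pres_tr _ hE hEP.
have hYder : forall v w, cross v w *m Y = cross (v *m Y) w + cross v (w *m Y).
  move=> v w; rewrite /Y !mulmxA -hEP hder mulmxDl -!hEt.
  by rewrite -(mulmxA v E E^T) hE mulmx1 -(mulmxA w E E^T) hE mulmx1.
have crdE0 : forall n, (n < 7)%N -> @ek R n *m E = frv e1 e2 e4 n.
  move=> n hn; rewrite /E mul_frm !crd_ek //.
  by case: n hn => [|[|[|[|[|[|[|n]]]]]]] //= _;
    rewrite ?scale1r ?scale0r ?mulr1n ?mulr0n ?scale1r ?scale0r ?add0r ?addr0.
have r0 : @ek R 0 *m Y = 0 by rewrite /Y !mulmxA crdE0 //= h1X !mul0mx.
have r1 : @ek R 1 *m Y = 0 by rewrite /Y !mulmxA crdE0 //= h2X !mul0mx.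
have r2 : @ek R 2 *m Y = 0 by rewrite /Y !mulmxA crdE0 //= -/e3 h3X !mul0mx.
rewrite /mx_in_frame -/Y; clearbody Y.
have c03 : cross (@ek R 0) (ek 3) = ek 4.
  by apply: crd_ext; crdS; rewrite !crd_ek //= ?mulr1n ?mulr0n; ring.
have c13 : cross (@ek R 1) (ek 3) = ek 5.
  by apply: crd_ext; crdS; rewrite !crd_ek //= ?mulr1n ?mulr0n; ring.
have c23 : cross (@ek R 2) (ek 3) = ek 6.
  by apply: crd_ext; crdS; rewrite !crd_ek //= ?mulr1n ?mulr0n; ring.
have r4 : @ek R 4 *m Y = cross (ek 0) (ek 3 *m Y) by rewrite -c03 hYder r0 cross0l add0r.
have r5 : @ek R 5 *m Y = cross (ek 1) (ek 3 *m Y) by rewrite -c13 hYder r1 cross0l add0r.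
have r6 : @ek R 6 *m Y = cross (ek 2) (ek 3 *m Y) by rewrite -c23 hYder r2 cross0l add0r.
have key : forall i j : 'I_7, Y i j = crd (@ek R i *m Y) j.
  by move=> i j; rewrite /crd /ek -rowE mxE !inord_val.
have Yc : forall i j, (i < 7)%N -> (j < 7)%N ->
    crd (@ek R i *m Y) j = - crd (@ek R j *m Y) i.
  move=> i j hi hj; rewrite /crd /ek -!rowE !mxE.
  by have := congr1 (fun M : 'M[R]_7 => M (inord j) (inord i)) hYt; rewrite !mxE.
have c30 : crd (@ek R 3 *m Y) 0 = 0 by rewrite Yc // r0 crd0 oppr0.
have c31 : crd (@ek R 3 *m Y) 1 = 0 by rewrite Yc // r1 crd0 oppr0.
have c32 : crd (@ek R 3 *m Y) 2 = 0 by rewrite Yc // r2 crd0 oppr0.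
have c33 : crd (@ek R 3 *m Y) 3 = 0 by apply: neg_self; rewrite -Yc.
exists (- crd (@ek R 3 *m Y) 4), (- crd (@ek R 3 *m Y) 5), (- crd (@ek R 3 *m Y) 6).
apply/matrixP => i j; rewrite key mxE.
case: i => [[|[|[|[|[|[|[|i]]]]]]]] Hi //; case: j => [[|[|[|[|[|[|[|j]]]]]]]] Hj //=;
  rewrite ?r0 ?r1 ?r2 ?r4 ?r5 ?r6; crdS; rewrite ?crd_ek //= ?mulr1n ?mulr0n
  ?c30 ?c31 ?c32 ?c33; ring.
Qed.
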